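(* The classes $\mathcal L(RTG)$ and $\mathcal L(LT)$ are incomparable: there is a picture language generated by some regional tile grammar that is not locally testable, and there is a locally testable picture language that is generated by no regional tile grammar.
   Context: Pictures: for a finite alphabet $\Sigma$, a picture over $\Sigma$ is a nonempty rectangular array of elements of $\Sigma$; $\Sigma^{++}$ is the set of all of them; a picture language is a subset of $\Sigma^{++}$. For $\#\notin\Sigma$, $\hat p$ is $p$ surrounded by a one-pixel frame of $\#$'s. For $k\ge2$, a $k$-tile is a $k\times k$ picture; a $2$-tile is called a tile; $\llbracket q\rrbracket$ is the set of tiles occurring as subpictures (on consecutive rows and columns) of $q$. For a finite tile set $\theta$ over $\Gamma\cup\{\#\}$, $LOC(\theta)=\{p\in\Gamma^{++}:\llbracket\hat p\rrbracket\subseteq\theta\}$. A language $L\subseteq\Sigma^{++}$ is locally testable (class $\mathcal L(LT)$) if there are $k\ge 2$ and a finite set $\theta$ of $k$-tiles over $\Sigma\cup\{\#\}$ such that $L$ is the set of $p\in\Sigma^{++}$ all of whose $k\times k$ subpictures of $\hat p$ belong to $\theta$. Subdomains, partitions: a subdomain $(x,y;x',y')$ of $p$ is the rectangle of positions $\{x,\dots,x'\}\times\{y,\dots,y'\}$, $\mathrm{spic}(p,d)$ its subpicture, $d\oplus(a,b)$ its translate. $d$ is $C$-homogeneous (label $C$) if all its pixels equal $C$. Subdomains are adjacent if they share a horizontal or vertical boundary segment of positive length. A homogeneous partition of $p$ is a partition of its positions into homogeneous subdomains; strong if adjacent subdomains have distinct labels (then unique, written $\Pi(p)$); regional if distinct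 subdomains have distinct labels; $\mathrm{unit}(p)$ is the partition into single pixels. A language is regional if each of its pictures admits a regional homogeneous partition. Tile grammars: a TG is $G=(\Sigma,N,S,R)$, $\Sigma,N$ disjoint finite alphabets, $S\in N$, finite rule set $R$ with fixed size rules $A\to t$ ($t\in\Sigma$) and variable size rules $A\to\omega$ ($\omega$ a finite tile set over $N\cup\{\#\}$ with no concave tile, i.e. no tile with rows $(B,B)$ over $(C,B)$ or a rotation of it, $B\ne\#$, $C\ne B$). $(p,\pi)\Rightarrow_G(p',\pi')$ iff for some $A$-homogeneous $d=(x,y;x',y')\in\pi$ and a rule with left side $A$, $p'$ is $p$ with $\mathrm{spic}(p,d)$ replaced by $t$ (rule $A\to t$, $d$ a single pixel) or by some $s\in LOC(\omega)$ of the size of $d$, and $\pi'=(\pi\setminus\{d\})\cup(\Pi(s)\oplus(x-1,y-1))$. $L(G)=\{p\in\Sigma^{++}:(S^{|p|},\{\text{positions of }p\})\Rightarrow_G^*(p,\mathrm{unit}(p))\}$, $S^{|p|}$ the $S$-homogeneous picture of the size of $p$. A regional tile grammar (RTG) is a TG in which $LOC(\omega)$ is regional for every variable size rule $A\to\omega$; $\mathcal L(RTG)$ is the class of languages they generate. *)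

(* Defs.v *)
From HB Require Import structures.
From mathcomp Require Import all_boot all_order all_algebra.

Set Implicit Arguments.
Unset Strict Implicit.
Unset Printing Implicit Defensive.

(* A picture over S is a nonempty rectangular array; we store
   it as a matrix with prows.+1 rows and pcols.+1 columns (so it is
   nonempty by construction).  Positions are 0-based (row, column). *)
Record picture (S : Type) := Picture {
  prows : nat;
  pcols : nat;
  pmat  : 'M[S]_(prows.+1, pcols.+1) }.

Definition nrows S (p : picture S) := (prows p).+1.
Definition ncols S (p : picture S) := (pcols p).+1.

Definition pix S (p : picture S) (i j : nat) : S :=
  pmat p (inord i) (inord j).

Definition language (S : Type) := picture S -> Prop.

(* The extra symbol # is represented by None in option S. *)
Definition framed (T : Type) (h w : nat) (g : nat -> nat -> T)
  (i j : nat) : option T :=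
  if (0 < i <= h) && (0 < j <= w) then Some (g i.-1 j.-1) else None.

Definition ktile_at (T : Type) (k : nat) (F : nat -> nat -> T) (i j : nat)
  : 'M[T]_k := \matrix_(a < k, b < k) F (i + a) (j + b).

Definition all_ktiles_in (T : finType) (k : nat) (theta : {set 'M[option T]_k})
  (h w : nat) (g : nat -> nat -> T) : Prop :=
  forall i j, i + k <= h.+2 -> j + k <= w.+2 ->
    ktile_at k (framed h w g) i j \in theta.

Definition locally_testable (Sigma : finType) (L : language Sigma) : Prop :=
  exists k : nat, 2 <= k /\
  exists theta : {set 'M[option Sigma]_k},
    forall p : picture Sigma,
      L p <-> all_ktiles_in theta (nrows p) (ncols p) (pix p).

Definition in_LOC (T : finType) (omega : {set 'M[option T]_2})
  (h w : nat) (g : nat -> nat -> T) : Prop :=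
  0 < h /\ 0 < w /\ all_ktiles_in omega h w g.

(* Subdomains (x, y; x', y') : the rectangle of positions
   {r1..r2} x {c1..c2}. *)
Record rect := Rect { r1 : nat; c1 : nat; r2 : nat; c2 : nat }.

Definition in_rect (d : rect) (i j : nat) : bool :=
  (r1 d <= i <= r2 d) && (c1 d <= j <= c2 d).

Definition shift_rect (a b : nat) (d : rect) : rect :=
  Rect (r1 d + a) (c1 d + b) (r2 d + a) (c2 d + b).

Definition homog (T : Type) (f : nat -> nat -> T) (d : rect) (C : T) : Prop :=
  forall i j, in_rect d i j -> f i j = C.

Definition label (T : Type) (f : nat -> nat -> T) (d : rect) : T :=
  f (r1 d) (c1 d).

(* adjacency: sharing a horizontal or vertical boundary segment of
   positive length *)
Definition adjacent (d e : rect) : Prop :=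
  ((r2 d).+1 = r1 e /\ c1 d <= c2 e /\ c1 e <= c2 d) \/
  ((r2 e).+1 = r1 d /\ c1 d <= c2 e /\ c1 e <= c2 d) \/
  ((c2 d).+1 = c1 e /\ r1 d <= r2 e /\ r1 e <= r2 d) \/
  ((c2 e).+1 = c1 d /\ r1 d <= r2 e /\ r1 e <= r2 d).

Definition partition_set := rect -> Prop.

Definition hom_partition (T : Type) (h w : nat) (f : nat -> nat -> T)
  (pi : partition_set) : Prop :=
  (forall d, pi d ->
     [/\ r1 d <= r2 d, c1 d <= c2 d, r2 d < h, c2 d < w &
         exists C, homog f d C]) /\
  (forall i j, i < h -> j < w -> exists! d, pi d /\ in_rect d i j).

Definition strong_hom_partition (T : Type) (h w : nat) (f : nat -> nat -> T)
  (pi : partition_set) : Prop :=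
  hom_partition h w f pi /\
  forall d e, pi d -> pi e -> adjacent d e -> label f d <> label f e.

Definition regional_hom_partition (T : Type) (h w : nat) (f : nat -> nat -> T)
  (pi : partition_set) : Prop :=
  hom_partition h w f pi /\
  forall d e, pi d -> pi e -> d <> e -> label f d <> label f e.

Definition unit_partition (h w : nat) : partition_set :=
  fun d => [/\ r1 d = r2 d, c1 d = c2 d, r1 d < h & c1 d < w].

Definition whole_partition (h w : nat) : partition_set :=
  fun d => d = Rect 0 0 h.-1 w.-1.

Definition concave_base (T : Type) (B : T) (C : option T) : 'M[option T]_2 :=
  \matrix_(i < 2, j < 2) if (i == 1 :> nat) && (j == 0 :> nat) then C else Some B.

Definition rot90 (T : Type) (t : 'M[T]_2) : 'M[T]_2 :=
  \matrix_(i < 2, j < 2) t (rev_ord j) i.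

Definition concave (T : finType) (t : 'M[option T]_2) : Prop :=
  exists (B : T) (C : option T), C != Some B /\
    exists k, k < 4 /\ t = iter k (@rot90 _) (concave_base B C).

(* Terminals Sigma and nonterminals
   NT are separate finite types (hence disjoint); intermediate pictures
   are over (Sigma + NT).  Rules: fixed size rules A -> t and variable
   size rules A -> omega, omega a (finite) set of tiles over NT + {#}. *)
Record tile_grammar (Sigma NT : finType) := TileGrammar {
  tg_start : NT;
  tg_fixed : seq (NT * Sigma);
  tg_var   : seq (NT * {set 'M[option NT]_2}) }.

Definition tg_wf (Sigma NT : finType) (G : tile_grammar Sigma NT) : Prop :=
  forall A omega, (A, omega) \in tg_var G ->
    forall t, t \in omega -> ~ concave t.

Definition tg_step (Sigma NT : finType) (G : tile_grammar Sigma NT)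
  (st st' : (nat -> nat -> Sigma + NT) * partition_set) : Prop :=
  let: (p, pi) := st in let: (p', pi') := st' in
  exists (d : rect) (A : NT),
    pi d /\ homog p d (inr A) /\
    let h := (r2 d - r1 d).+1 in
    let w := (c2 d - c1 d).+1 in
    exists (s : nat -> nat -> Sigma + NT) (sigma : partition_set),
      ( (exists t : Sigma, (A, t) \in tg_fixed G /\ h = 1 /\ w = 1 /\
                            s 0 0 = inl t)
        \/ (exists (omega : {set 'M[option NT]_2}) (g : nat -> nat -> NT),
              (A, omega) \in tg_var G /\ in_LOC omega h w g /\
              (forall i j, s i j = inr (g i j))) ) /\
      strong_hom_partition h w s sigma /\
      (forall i j, p' i j =
         if in_rect d i j then s (i - r1 d) (j - c1 d) else p i j) /\
      (forall e, pi' e <->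
         ((pi e /\ e <> d) \/ exists e0, sigma e0 /\ e = shift_rect (r1 d) (c1 d) e0)).

Inductive star (X : Type) (R : X -> X -> Prop) : X -> X -> Prop :=
| star_refl x : star R x x
| star_step x y z : R x y -> star R y z -> star R x z.

Definition generates (Sigma NT : finType) (G : tile_grammar Sigma NT)
  (p : picture Sigma) : Prop :=
  exists (q : nat -> nat -> Sigma + NT) (pi : partition_set),
    star (@tg_step Sigma NT G)
      (fun _ _ => inr (tg_start G), whole_partition (nrows p) (ncols p))
      (q, pi) /\
    (forall i j, i < nrows p -> j < ncols p -> q i j = inl (pix p i j)) /\
    (forall e, pi e <-> unit_partition (nrows p) (ncols p) e).

Definition regional_LOC (T : finType) (omega : {set 'M[option T]_2}) : Prop :=
  forall h w (g : nat -> nat -> T), in_LOC omega h w g ->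
    exists pi, regional_hom_partition h w g pi.

Definition is_RTG (Sigma NT : finType) (G : tile_grammar Sigma NT) : Prop :=
  tg_wf G /\ forall A omega, (A, omega) \in tg_var G -> regional_LOC omega.

Definition in_L_RTG (Sigma : finType) (L : language Sigma) : Prop :=
  exists (NT : finType) (G : tile_grammar Sigma NT),
    is_RTG G /\ forall p, L p <-> generates G p.

(* Main.v *)
From HB Require Import structures.
From mathcomp Require Import all_boot all_order all_algebra.
From Stdlib Require Import Lia Classical FunctionalExtensionality PropExtensionality ClassicalEpsilon.
Require Import Defs.

Set Implicit Arguments.
Unset Strict Implicit.
Unset Printing Implicit Defensive.


Ltac natify := repeat match goal with
 | H : context [?x.*2] |- _ => rewrite -(addnn x) in H
 | |- context [?x.*2] => rewrite -(addnn x)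
 | H : is_true (_ && _) |- _ => let H1 := fresh H in let H2 := fresh H in case/andP: H => H1 H2
 | |- is_true (_ && _) => apply/andP; split
 | |- _ /\ _ => split
 | H : is_true (_ <= _) |- _ => apply (elimT leP) in H
 | H : is_true (_ < _) |- _ => apply (elimT ltP) in H
 | H : is_true (_ == _) |- _ => apply (elimT eqP) in H
 | |- is_true (_ <= _) => apply/leP
 | |- is_true (_ < _) => apply/ltP
 | |- is_true (_ == _) => apply/eqP
 end; try unfold addn, subn, muln, addn_rec, subn_rec, muln_rec in *.
Ltac mylia := natify; lia.

Definition rect_code (d : rect) := (r1 d, c1 d, r2 d, c2 d).
Definition rect_decode (x : nat * nat * nat * nat) :=
  let: (a, b, c, e) := x in Rect a b c e.
Lemma rect_codeK : cancel rect_code rect_decode. Proof. by case. Qed.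
HB.instance Definition _ := Equality.copy rect (can_type rect_codeK).

Lemma rect_eta d : d = Rect (r1 d) (c1 d) (r2 d) (c2 d). Proof. by case: d. Qed.

Lemma in_rectP d i j : in_rect d i j <-> [/\ r1 d <= i, i <= r2 d, c1 d <= j & j <= c2 d].
Proof.
rewrite /in_rect; split; first by case/andP=> /andP[-> ->] /andP[-> ->].
by case=> -> -> -> ->.
Qed.

Definition wf (d : rect) := r1 d <= r2 d /\ c1 d <= c2 d.
Definition disjoint (d e : rect) := forall i j, in_rect d i j -> in_rect e i j -> False.
Definition Inv (pi : partition_set) :=
  (forall e, pi e -> wf e) /\
  (forall e1 e2, pi e1 -> pi e2 -> e1 <> e2 -> disjoint e1 e2).

Definition ucell (e : rect) := r1 e = r2 e /\ c1 e = c2 e.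

Lemma star_trans X (R : X -> X -> Prop) x y z : star R x y -> star R y z -> star R x z.
Proof. by elim=> // a b c Hab _ IH /IH; apply: star_step. Qed.

Lemma star1 X (R : X -> X -> Prop) x y : R x y -> star R x y.
Proof. by move=> H; apply: star_step H (star_refl _ _). Qed.

Lemma unit_hom T h w (f : nat -> nat -> T) : hom_partition h w f (unit_partition h w).
Proof.
split.
  move=> d [E1 E2 Hr Hc]; split; rewrite -?E1 -?E2 //.
  exists (f (r1 d) (c1 d)) => i j /in_rectP[a b c e].
  have -> : i = r1 d by mylia.
  by have -> : j = c1 d by mylia.
move=> i j Hi Hj; exists (Rect i j i j); split.
  by split=> //; rewrite /in_rect /= !leqnn.
move=> d [[E1 E2 Hr Hc] /in_rectP[a b c e]].
rewrite (rect_eta d); congr Rect; mylia.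
Qed.

Lemma unit_adj_neq h w d e : unit_partition h w d -> unit_partition h w e -> adjacent d e ->
  (r1 d <> r1 e \/ c1 d <> c1 e).
Proof.
move=> [E1 E2 _ _] [F1 F2 _ _]; rewrite /adjacent -E1 -E2 -F1 -F2.
move=> H; case: H => [[H _]|[[H _]|[[H _]|[H _]]]]; mylia.
Qed.

Lemma unit11 e : unit_partition 1 1 e -> e = Rect 0 0 0 0.
Proof. move=> [E1 E2 Hr Hc]; rewrite (rect_eta e); congr Rect; mylia. Qed.

Lemma strong_unit11 T (f : nat -> nat -> T) : strong_hom_partition 1 1 f (unit_partition 1 1).
Proof.
split; first exact: unit_hom.
move=> d e /unit11 -> /unit11 ->.
by rewrite /adjacent /=; case=> [[//]|[[//]|[[//]|[//]]]].
Qed.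

Lemma fix_step (Sigma NT : finType) (G : tile_grammar Sigma NT) p (pi : partition_set) d A t :
  pi d -> r1 d = r2 d -> c1 d = c2 d -> p (r1 d) (c1 d) = inr A -> (A, t) \in tg_fixed G ->
  tg_step G (p, pi) (fun i j => if in_rect d i j then inl t else p i j, pi).
Proof.
move=> Hd E1 E2 HA Ht.
exists d, A; split=> //; split.
  move=> i j /in_rectP[a b c e].
  have -> : i = r1 d by mylia.
  by have -> : j = c1 d by mylia.
rewrite -E1 -E2 !subnn.
exists (fun _ _ => inl t), (unit_partition 1 1); split.
  by left; exists t.
split; first exact: strong_unit11.
split; first by [].
move=> e; split.
  move=> He; case: (eqVneq e d) => [->|Hne]; last first.
    by left; split=> // Hed; move: Hne; rewrite Hed eqxx.
  right; exists (Rect 0 0 0 0); split.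
    by split.
  by move: E1 E2; case: (d) => a b c z /= <- <-; rewrite /shift_rect /= !add0n.
case=> [[//]|[e0 [/unit11 -> ->]]].
suff -> : shift_rect (r1 d) (c1 d) (Rect 0 0 0 0) = d by [].
by move: E1 E2; case: (d) => a b c z /= <- <-; rewrite /shift_rect /= !add0n.
Qed.


Definition NT1 : finType := option (option bool).
Definition SS : NT1 := None.
Definition AA : NT1 := Some None.
Definition BB : NT1 := Some (Some false).
Definition CC : NT1 := Some (Some true).

Definition pairOK (a b : option NT1) : bool :=
  [|| (a == None) && (b == Some AA), (a == Some AA) && (b == Some BB),
      (a == Some BB) && (b == Some CC) | (a == Some CC) && (b == None)].
Definition okTile (x00 x01 x10 x11 : option NT1) : bool :=
  (x00 == None) && (x01 == None) && pairOK x10 x11 ||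
  (x10 == None) && (x11 == None) && pairOK x00 x01.

Notation i0 := (@Ordinal 2 0 isT).
Notation i1 := (@Ordinal 2 1 isT).

Definition omega1 : {set 'M[option NT1]_2} :=
  [set t : 'M[option NT1]_2 | okTile (t i0 i0) (t i0 i1) (t i1 i0) (t i1 i1)].

Lemma tileok h w (g : nat -> nat -> NT1) i j : all_ktiles_in omega1 h w g ->
  i + 2 <= h.+2 -> j + 2 <= w.+2 ->
  okTile (framed h w g i j) (framed h w g i j.+1) (framed h w g i.+1 j) (framed h w g i.+1 j.+1).
Proof.
move=> H Hi Hj; have := H i j Hi Hj.
by rewrite inE /ktile_at !mxE /= !addn0 !addn1.
Qed.

Arguments tileok : clear implicits.

Lemma loc1 h w g : in_LOC omega1 h w g ->
  [/\ h = 1, w = 3, g 0 0 = AA, g 0 1 = BB & g 0 2 = CC].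
Proof.
case=> Hh [Hw H].
have T00 := tileok _ _ _ 0 0 H (isT : 0 + 2 <= h.+2) (isT : 0 + 2 <= w.+2).
move: T00; rewrite /framed /= Hh Hw /=.
rewrite /okTile /pairOK /=.
case E0: (g 0 0) => [[[]|]|] //= _.
have Eh : h = 1.
  case: h Hh H => [//|[//|h]] _ H.
  have := tileok _ _ _ 1 0 H (isT : 1 + 2 <= h.+4) (isT : 0 + 2 <= w.+2).
  by rewrite /framed /= Hw /= E0 /okTile /pairOK /=.
subst h.
case: w Hw H => [//|[|[|[|w]]]] _ H.
- have := tileok _ _ _ 0 1 H (isT : 0 + 2 <= 3) (isT : 1 + 2 <= 3).
  by rewrite /framed /= E0 /okTile /pairOK /=.
- have := tileok _ _ _ 0 1 H (isT : 0 + 2 <= 3) (isT : 1 + 2 <= 4).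
  rewrite /framed /= E0 /okTile /pairOK /=.
  case E1: (g 0 1) => [[[]|]|] //= _.
  have := tileok _ _ _ 0 2 H (isT : 0 + 2 <= 3) (isT : 2 + 2 <= 4).
  by rewrite /framed /= E1 /okTile /pairOK /=.
- have := tileok _ _ _ 0 1 H (isT : 0 + 2 <= 3) (isT : 1 + 2 <= 5).
  rewrite /framed /= E0 /okTile /pairOK /=.
  case E1: (g 0 1) => [[[]|]|] //= _.
  have := tileok _ _ _ 0 2 H (isT : 0 + 2 <= 3) (isT : 2 + 2 <= 5).
  rewrite /framed /= E1 /okTile /pairOK /=.
  by case E2: (g 0 2) => [[[]|]|] //= _.
- have := tileok _ _ _ 0 1 H (isT : 0 + 2 <= 3) (isT : 1 + 2 <= (w.+4).+2).
  rewrite /framed /= E0 /okTile /pairOK /=.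
  case E1: (g 0 1) => [[[]|]|] //= _.
  have := tileok _ _ _ 0 2 H (isT : 0 + 2 <= 3) (isT : 2 + 2 <= (w.+4).+2).
  rewrite /framed /= E1 /okTile /pairOK /=.
  case E2: (g 0 2) => [[[]|]|] //= _.
  have := tileok _ _ _ 0 3 H (isT : 0 + 2 <= 3) (isT : 3 + 2 <= (w.+4).+2).
  by rewrite /framed /= E2 /okTile /pairOK /=.
Qed.

Lemma concave_not_ok (t : 'M[option NT1]_2) : concave t ->
  okTile (t i0 i0) (t i0 i1) (t i1 i0) (t i1 i1) = false.
Proof.
case=> B [C [HC [k [Hk ->]]]].
move: HC; case: k Hk => [|[|[|[|k]]]] // _;
  rewrite /= /rot90 /concave_base !mxE /=;
  by case: B => [[[]|]|]; case: C => [[[[]|]|]|].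
Qed.

Definition G1 : tile_grammar unit NT1 :=
  TileGrammar SS [:: (AA, tt); (BB, tt); (CC, tt)] [:: (SS, omega1)].

Lemma regional_omega1 : regional_LOC omega1.
Proof.
move=> h w g HL; have [Eh Ew E0 E1 E2] := loc1 HL; subst h w.
exists (unit_partition 1 3); split; first exact: unit_hom.
move=> d e [Dr Dc Hdr Hdc] [Er Ec Her Hec] Hne.
rewrite /label.
have -> : r1 d = 0 by mylia.
have -> : r1 e = 0 by mylia.
have Hc : c1 d <> c1 e.
  move=> Hc; apply: Hne; rewrite (rect_eta d) (rect_eta e) -Dr -Dc -Er -Ec Hc.
  by congr Rect; mylia.
move: Hdc Hec Hc; case: (c1 d) => [|[|[|//]]]; case: (c1 e) => [|[|[|//]]] //;
  by rewrite ?E0 ?E1 ?E2.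
Qed.

Lemma G1_RTG : is_RTG G1.
Proof.
split.
  move=> A om; rewrite inE => /eqP [_ ->] t Ht Hc.
  by move: Ht; rewrite inE concave_not_ok.
move=> A om; rewrite inE => /eqP [_ ->]; exact: regional_omega1.
Qed.

Definition upic (n : nat) : picture unit := @Picture unit 0 n (const_mx tt).

Definition g1 (i j : nat) : NT1 := if j == 0 then AA else if j == 1 then BB else CC.

Lemma loc_g1 : in_LOC omega1 1 3 g1.
Proof.
split=> //; split=> // i j Hi Hj.
rewrite inE /ktile_at !mxE /= !addn0 !addn1.
case: i Hi => [|[|i]] Hi; case: j Hj => [|[|[|[|j]]]] Hj //;
  by rewrite ?addn2 in Hi Hj.
Qed.

Definition R3 := Rect 0 0 0 2.
Definition p1 : nat -> nat -> unit + NT1 :=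
  fun i j => if in_rect R3 i j then inr (g1 (i - 0) (j - 0)) else inr SS.

Lemma step0 : tg_step G1 (fun _ _ => inr SS, whole_partition 1 3) (p1, unit_partition 1 3).
Proof.
exists R3, SS; split; first by [].
split; first by [].
exists (fun i j => inr (g1 i j)), (unit_partition 1 3); split.
  right; exists omega1, g1; split; first by rewrite inE.
  by split=> //; exact: loc_g1.
split.
  split; first exact: unit_hom.
  move=> d e Hd He Hadj.
  have [Dr Dc Hdr Hdc] := Hd; have [Er Ec Her Hec] := He.
  rewrite /label.
  have -> : r1 d = 0 by mylia.
  have -> : r1 e = 0 by mylia.
  have Hc : c1 d <> c1 e.
    case: (unit_adj_neq Hd He Hadj) => // H; exfalso; apply: H; mylia.
  move: Hdc Hec Hc; case: (c1 d) => [|[|[|//]]]; case: (c1 e) => [|[|[|//]]] //.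
split; first by [].
move=> e; split.
  move=> He; right; exists e; split=> //.
  by rewrite /shift_rect !addn0 -rect_eta.
case=> [[He Hne]|[e0 [He0 ->]]].
  by exfalso; apply: Hne; rewrite He.
by rewrite /shift_rect !addn0 -rect_eta.
Qed.

Definition cellR (j : nat) := Rect 0 j 0 j.
Definition upd (p : nat -> nat -> unit + NT1) (d : rect) : nat -> nat -> unit + NT1 :=
  fun i j => if in_rect d i j then inl tt else p i j.
Definition p2 := upd p1 (cellR 0).
Definition p3 := upd p2 (cellR 1).
Definition p4 := upd p3 (cellR 2).

Lemma gen3 : generates G1 (upic 2).
Proof.
exists p4, (unit_partition 1 3); split.
  apply: star_step step0 _.
  apply: star_step (@fix_step _ _ G1 p1 _ (cellR 0) AA tt _ _ _ _ _) _ => //.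
  apply: star_step (@fix_step _ _ G1 p2 _ (cellR 1) BB tt _ _ _ _ _) _ => //.
  apply: star_step (@fix_step _ _ G1 p3 _ (cellR 2) CC tt _ _ _ _ _) _ => //.
  exact: star_refl.
split; last by [].
move=> i j Hi Hj; rewrite /nrows /ncols /= in Hi Hj.
have -> : i = 0 by mylia.
case: (pix _ _ _).
rewrite /p4 /p3 /p2 /upd.
by case: j Hj => [|[|[|//]]] _.
Qed.

Lemma nogen n : n < 2 -> ~ generates G1 (upic n).
Proof.
move=> Hn [q [pi [Hst [Hq _]]]].
inversion Hst as [x Ex|x y z Hstep _ Ex Ez]; subst.
  by have := Hq 0 0 isT isT.
move: Hstep; case: y => p' pi' /=.
case=> d [A [Hd [Hh [s [sg [Hr _]]]]]].
move: Hd; rewrite /whole_partition => Ed; subst d.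
have EA : A = SS.
  have := Hh 0 0; rewrite /in_rect /= => /(_ isT) [].
  by move=> ->.
subst A.
case: Hr => [[t [Ht _]]|[om [g [Hom [HL _]]]]].
  by move: Ht; rewrite !inE.
move: Hom; rewrite inE => /eqP [Eom]; subst om.
have [_ Ew _ _ _] := loc1 HL.
move: Ew; rewrite /ncols /= => Ew; mylia.
Qed.

Lemma unit_eq (x y : unit) : x = y. Proof. by case: x; case: y. Qed.

Lemma tiles_transfer k (theta : {set 'M[option unit]_k}) : 2 <= k <= 3 ->
  all_ktiles_in theta 1 3 (pix (upic 2)) -> all_ktiles_in theta 1 2 (pix (upic 1)).
Proof.
move=> /andP[Hk2 Hk3] H i j Hi Hj.
have Hj' : (if j == 0 then 0 else j.+1) + k <= 5.
  by case: eqP => [Ej|Hj0] /=; mylia.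
suff -> : ktile_at k (framed 1 2 (pix (upic 1))) i j =
  ktile_at k (framed 1 3 (pix (upic 2))) i (if j == 0 then 0 else j.+1) by exact: H.
apply/matrixP => a b; rewrite !mxE /framed.
have -> : (0 < j + b <= 2) = (0 < (if j == 0 then 0 else j.+1) + b <= 3).
  have Hb := ltn_ord b.
  case: eqP => [Ej|Hj0] /=; apply/idP/idP => ?; mylia.
case: ifP => // _; congr Some; exact: unit_eq.
Qed.

Lemma not_LT1 : ~ locally_testable (generates G1).
Proof.
case=> k [Hk [theta HL]].
case: (leqP k 3) => Hk3.
  have Hk23 : 2 <= k <= 3 by rewrite Hk Hk3.
  have H := tiles_transfer Hk23 ((HL (upic 2)).1 gen3).
  by apply: (@nogen 1 isT); apply/(HL (upic 1)).
apply: (@nogen 0 isT); apply/(HL (upic 0)) => i j Hi Hj.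
by exfalso; move: Hi; rewrite /nrows /= => Hi; mylia.
Qed.

Theorem part1 : exists (Sigma : finType) (L : language Sigma),
      in_L_RTG L /\ ~ locally_testable L.
Proof.
exists (unit : finType), (generates G1); split; last exact: not_LT1.
by exists NT1, G1; split; [exact: G1_RTG|].
Qed.


Definition hsz (e : rect) := (r2 e - r1 e).+1.
Definition wsz (e : rect) := (c2 e - c1 e).+1.

Lemma shift_in d e i j : wf d -> r2 e < hsz d -> c2 e < wsz d ->
  in_rect (shift_rect (r1 d) (c1 d) e) i j -> in_rect d i j /\ in_rect e (i - r1 d) (j - c1 d).
Proof.
rewrite /hsz /wsz /shift_rect => -[H1 H2] H3 H4 /in_rectP /= [a b c z].
split; apply/in_rectP; split; mylia.
Qed.

Lemma shift_in2 d e i j : in_rect e i j ->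
  in_rect (shift_rect (r1 d) (c1 d) e) (r1 d + i) (c1 d + j).
Proof. rewrite /shift_rect => /in_rectP [a b c z]; apply/in_rectP => /=; split; mylia. Qed.

Lemma hsz_shift a b e : hsz (shift_rect a b e) = hsz e.
Proof. by rewrite /hsz /shift_rect /= subnDr. Qed.
Lemma wsz_shift a b e : wsz (shift_rect a b e) = wsz e.
Proof. by rewrite /wsz /shift_rect /= subnDr. Qed.

Lemma wf_cell d : wf d -> in_rect d (r1 d) (c1 d).
Proof. by case=> H1 H2; rewrite /in_rect !leqnn H1 H2. Qed.

Section GenSec.
Variables (Sigma NT : finType) (G : tile_grammar Sigma NT).

Inductive Gen : NT -> nat -> nat -> (nat -> nat -> Sigma + NT) -> Prop :=
| GFix X t f : (X, t) \in tg_fixed G -> f 0 0 = inl t -> Gen X 1 1 f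
| GVar X om g sg h w f : (X, om) \in tg_var G -> in_LOC om h w g ->
   strong_hom_partition h w (fun i j => inr (g i j) : Sigma + NT) sg ->
   (forall e, sg e -> Gen (g (r1 e) (c1 e)) (hsz e) (wsz e)
                         (fun i j => f (r1 e + i) (c1 e + j))) ->
   Gen X h w f.

Lemma Gen_ext X h w f f' : Gen X h w f ->
  (forall i j, i < h -> j < w -> f i j = f' i j) -> Gen X h w f'.
Proof.
move=> HG; elim: HG f' => {X h w f}.
  move=> X t f Ht Hf f' E; apply: GFix Ht _; by rewrite -E.
move=> X om g sg h w f Hom HL Hs _ IH f' E.
apply: (GVar Hom HL Hs) => e He; apply: IH => // i j Hi Hj; apply: E.
  have [Her _ Hr _ _] := (Hs.1.1 e He); move: Hi; rewrite /hsz => Hi; mylia.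
have [_ Hec _ Hc _] := (Hs.1.1 e He); move: Hj; rewrite /wsz => Hj; mylia.
Qed.

Lemma homog_val T (f : nat -> nat -> T) e C i j : homog f e C -> wf e -> in_rect e i j ->
  f i j = f (r1 e) (c1 e).
Proof. by move=> H Hw Hi; rewrite (H _ _ Hi) (H _ _ (wf_cell Hw)). Qed.

Lemma step_unpack p pi p' pi' : tg_step G (p, pi) (p', pi') ->
  exists d A, pi d /\ homog p d (inr A) /\
    exists (s : nat -> nat -> Sigma + NT) (sigma : partition_set),
      ( (exists t : Sigma, (A, t) \in tg_fixed G /\ hsz d = 1 /\ wsz d = 1 /\
                            s 0 0 = inl t)
        \/ (exists (omega : {set 'M[option NT]_2}) (g : nat -> nat -> NT),
              (A, omega) \in tg_var G /\ in_LOC omega (hsz d) (wsz d) g /\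
              (forall i j, s i j = inr (g i j))) ) /\
      strong_hom_partition (hsz d) (wsz d) s sigma /\
      (forall i j, p' i j =
         if in_rect d i j then s (i - r1 d) (j - c1 d) else p i j) /\
      (forall e, pi' e <->
         ((pi e /\ e <> d) \/ exists e0, sigma e0 /\ e = shift_rect (r1 d) (c1 d) e0)).
Proof. by []. Qed.

Lemma Inv_step p pi p' pi' : Inv pi -> tg_step G (p, pi) (p', pi') -> Inv pi'.
Proof.
move=> [Hwf Hdis] /step_unpack [d [A [Hd [Hh [s [sg [_ [[[Hsg1 Hsg2] _] [_ Hpi']]]]]]]]].
have Hwd := Hwf _ Hd.
split.
  move=> e /Hpi' [[He _]|[e0 [He0 ->]]]; first exact: Hwf.
  have [Hr Hc _ _ _] := Hsg1 _ He0.
  by rewrite /wf /shift_rect /=; split; rewrite leq_add2r.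
have sub e0 i j : sg e0 -> in_rect (shift_rect (r1 d) (c1 d) e0) i j ->
    in_rect d i j /\ in_rect e0 (i - r1 d) (j - c1 d).
  by move=> He0; have [_ _ Hr Hc _] := Hsg1 _ He0; apply: shift_in.
move=> e1 e2 /Hpi' H1 /Hpi' H2 Hne i j I1 I2.
case: H1 => [[H1 N1]|[a [Ha E1]]]; case: H2 => [[H2 N2]|[b [Hb E2]]].
- exact: (Hdis _ _ H1 H2 Hne i j).
- subst e2; have [Id _] := sub _ _ _ Hb I2; exact: (Hdis _ _ H1 Hd N1 i j).
- subst e1; have [Id _] := sub _ _ _ Ha I1; exact: (Hdis _ _ H2 Hd N2 i j).
- subst e1 e2; have [Id Ia] := sub _ _ _ Ha I1; have [_ Ib] := sub _ _ _ Hb I2.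
  have Hi : i - r1 d < hsz d by move: Id => /in_rectP [? ? ? ?]; rewrite /hsz; mylia.
  have Hj : j - c1 d < wsz d by move: Id => /in_rectP [? ? ? ?]; rewrite /wsz; mylia.
  have [x [_ Ux]] := Hsg2 _ _ Hi Hj.
  apply: Hne; rewrite -(Ux a (conj Ha Ia)) -(Ux b (conj Hb Ib)) //.
Qed.

Lemma persist x y : star (tg_step G) x y -> forall p pi q pf, x = (p, pi) -> y = (q, pf) ->
  forall i j t, p i j = inl t -> q i j = inl t.
Proof.
elim=> {x y} [x|x y z Hxy _ IH] p pi q pf Ex Ey i j t Ht.
  by subst; case: Ey => <-.
subst x; case: y Hxy IH => p' pi' Hxy IH.
apply: (IH _ _ _ _ erefl Ey).
move: Hxy => /step_unpack [d [A [Hd [Hh [s [sg [_ [_ [Hp' _]]]]]]]]].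
rewrite Hp'; case: ifP => // /Hh; congruence.
Qed.

Lemma sound x y : star (tg_step G) x y -> forall p pi q pf, x = (p, pi) -> y = (q, pf) ->
  Inv pi -> (forall e, pf e -> forall X, q (r1 e) (c1 e) <> inr X) ->
  forall d X, pi d -> homog p d (inr X) ->
  Gen X (hsz d) (wsz d) (fun i j => q (r1 d + i) (c1 d + j)).
Proof.
move=> Hst; elim: Hst => {x y} [x|x y z Hxy Hyz IH] p pi q pf Ex Ey Hinv Hfin d X Hd Hh.
  subst; case: Ey => Ep Epi; subst q pf.
  by exfalso; apply: (Hfin _ Hd X); apply: Hh; apply: wf_cell; exact: Hinv.1.
subst x; case: y Hxy Hyz IH => p' pi' Hxy Hyz IH.
have Hinv' := Inv_step Hinv Hxy.
move: (Hxy) => /step_unpack [d0 [A [Hd0 [Hh0 [s [sg [Hrule [Hs [Hp' Hpi']]]]]]]]].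
have Hwd0 := Hinv.1 _ Hd0.
case: (eqVneq d d0) => [Edd|Hne]; last first.
  apply: (IH _ _ _ _ erefl Ey Hinv' Hfin); first by apply/Hpi'; left; split=> //; apply/eqP.
  move=> i j Hij; rewrite Hp'; case: ifP => [Hij0|_]; last exact: Hh.
  have Hne' : d <> d0 by move=> E; move: Hne; rewrite E eqxx.
  by exfalso; apply: (Hinv.2 _ _ Hd Hd0 Hne' i j Hij Hij0).
subst d0.
have EA : A = X.
  have := Hh _ _ (wf_cell (Hinv.1 _ Hd)); rewrite (Hh0 _ _ (wf_cell (Hinv.1 _ Hd))); congruence.
subst A.
case: Hrule => [[t [Ht [E1 [E2 Es]]]]|[om [g [Hom [HL Es]]]]].
  rewrite E1 E2; apply: GFix Ht _.
  apply: (persist Hyz erefl Ey); rewrite Hp' !addn0 wf_cell // !subnn //.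
have Esg : s = (fun i j => inr (g i j)) by apply: functional_extensionality => i;
  apply: functional_extensionality => j; exact: Es.
subst s.
apply: (GVar Hom HL Hs) => e He.
have [[Her Hec Hr Hc [C HC]] _] := (Hs.1.1 e He, 0).
have Hwe : wf e by [].
have := IH _ _ _ _ erefl Ey Hinv' Hfin (shift_rect (r1 d) (c1 d) e) (g (r1 e) (c1 e)).
rewrite hsz_shift wsz_shift => IH'.
have E : (fun i j => q (r1 (shift_rect (r1 d) (c1 d) e) + i) (c1 (shift_rect (r1 d) (c1 d) e) + j)) =
         (fun i j => q (r1 d + (r1 e + i)) (c1 d + (c1 e + j))).
  apply: functional_extensionality => i; apply: functional_extensionality => j.
  by rewrite /shift_rect /= [r1 e + _]addnC [c1 e + _]addnC -!addnA.
rewrite -E; apply: IH'.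
  by apply/Hpi'; right; exists e.
move=> i j Hij.
have [Id Ie] := shift_in Hwd0 Hr Hc Hij.
rewrite Hp' Id; congr inr.
have := homog_val HC Hwe Ie; move=> [->] //.
Qed.

End GenSec.


Definition pb (P : Prop) : bool := if excluded_middle_informative P then true else false.
Lemma pbP (P : Prop) : reflect P (pb P).
Proof. by rewrite /pb; case: excluded_middle_informative => H; constructor. Qed.

Definition allR N : seq rect :=
  flatten [seq flatten [seq flatten [seq [seq Rect a b c z | z <- iota 0 N] | c <- iota 0 N]
     | b <- iota 0 N] | a <- iota 0 N].

Lemma allRP N e : r1 e < N -> c1 e < N -> r2 e < N -> c2 e < N -> e \in allR N.
Proof.
move=> H1 H2 H3 H4; rewrite (rect_eta e).
apply/flatten_mapP; exists (r1 e); first by rewrite mem_iota.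
apply/flatten_mapP; exists (c1 e); first by rewrite mem_iota.
apply/flatten_mapP; exists (r2 e); first by rewrite mem_iota.
by apply/mapP; exists (c2 e); first by rewrite mem_iota.
Qed.

Lemma ucell_in e : ucell e -> in_rect e (r1 e) (c1 e).
Proof. by case=> E1 E2; rewrite /in_rect -E1 -E2 !leqnn. Qed.

Lemma ucell_inv e i j : ucell e -> in_rect e i j -> i = r1 e /\ j = c1 e.
Proof. case=> E1 E2 /in_rectP [a b c z]; split; mylia. Qed.

Section CompSec.
Variables (Sigma NT : finType) (G : tile_grammar Sigma NT).

Definition fillp (p : nat -> nat -> Sigma + NT) d (f : nat -> nat -> Sigma + NT) :=
  fun i j => if in_rect d i j then f (i - r1 d) (j - c1 d) else p i j.
Definition fillpi (pi : partition_set) d : partition_set :=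
  fun e => (pi e /\ e <> d) \/ (ucell e /\ in_rect d (r1 e) (c1 e)).

Lemma Inv_fill pi d : Inv pi -> pi d -> Inv (fillpi pi d).
Proof.
move=> [Hwf Hdis] Hd; split.
  move=> e [[He _]|[[E1 E2] _]]; first exact: Hwf.
  by rewrite /wf E1 E2.
move=> e1 e2 H1 H2 Hne i j I1 I2.
case: H1 => [[H1 N1]|[U1 D1]]; case: H2 => [[H2 N2]|[U2 D2]].
- exact: (Hdis _ _ H1 H2 Hne i j).
- have [Ei Ej] := ucell_inv U2 I2; subst i j.
  exact: (Hdis _ _ H1 Hd N1 _ _ I1 D2).
- have [Ei Ej] := ucell_inv U1 I1; subst i j.
  exact: (Hdis _ _ H2 Hd N2 _ _ I2 D1).
- have [Ei Ej] := ucell_inv U1 I1; have [Fi Fj] := ucell_inv U2 I2.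
  apply: Hne; rewrite (rect_eta e1) (rect_eta e2) -U1.1 -U1.2 -U2.1 -U2.2.
  by congr Rect; congruence.
Qed.

Lemma step_pack p pi p' pi' d A (s : nat -> nat -> Sigma + NT) (sigma : partition_set) :
  pi d -> homog p d (inr A) ->
      ( (exists t : Sigma, (A, t) \in tg_fixed G /\ hsz d = 1 /\ wsz d = 1 /\
                            s 0 0 = inl t)
        \/ (exists (omega : {set 'M[option NT]_2}) (g : nat -> nat -> NT),
              (A, omega) \in tg_var G /\ in_LOC omega (hsz d) (wsz d) g /\
              (forall i j, s i j = inr (g i j))) ) ->
      strong_hom_partition (hsz d) (wsz d) s sigma ->
      (forall i j, p' i j =
         if in_rect d i j then s (i - r1 d) (j - c1 d) else p i j) ->
      (forall e, pi' e <->
         ((pi e /\ e <> d) \/ exists e0, sigma e0 /\ e = shift_rect (r1 d) (c1 d) e0)) ->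
  tg_step G (p, pi) (p', pi').
Proof. by move=> *; exists d, A; split=> //; split=> //; exists s, sigma. Qed.

Section Fold.
Variables (Y : rect -> nat -> nat -> Sigma + NT).
Definition foldp p (cs : seq rect) := foldl (fun p c => fillp p c (Y c)) p cs.
Definition foldpi pi (cs : seq rect) := foldl fillpi pi cs.

Lemma foldp_out cs p i j : (forall c, c \in cs -> ~~ in_rect c i j) -> foldp p cs i j = p i j.
Proof.
elim: cs p => // c cs IH p H /=.
rewrite IH; last by move=> c' Hc'; apply: H; rewrite inE Hc' orbT.
by rewrite /fillp (negbTE (H c _)) // inE eqxx.
Qed.

Lemma foldp_in cs p i j c : uniq cs -> c \in cs -> in_rect c i j ->
  (forall c', c' \in cs -> in_rect c' i j -> c' = c) ->
  foldp p cs i j = Y c (i - r1 c) (j - c1 c).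
Proof.
elim: cs p => // c0 cs IH p /= /andP [Hn Hu].
rewrite inE => /orP [/eqP Ec|Hc] Hin Hun.
  subst c0; rewrite foldp_out.
    by rewrite /fillp Hin.
  move=> c' Hc'; apply/negP => Hc'in.
  have E : c' = c by apply: Hun => //; rewrite inE Hc' orbT.
  by subst c'; rewrite Hc' in Hn.
apply: IH => // c' Hc' Hin'; apply: Hun => //; by rewrite inE Hc' orbT.
Qed.

Lemma foldpi_spec cs pi e : uniq cs ->
  (forall c c', c \in cs -> c' \in cs -> c <> c' -> disjoint c c') ->
  foldpi pi cs e <-> (pi e /\ e \notin cs) \/ (ucell e /\ exists2 c, c \in cs & in_rect c (r1 e) (c1 e)).
Proof.
elim: cs pi => [|c cs IH] pi /=.
  by move=> _ _; split; [left|case=> [[]|[_ []]]].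
move=> /andP [Hn Hu] Hdis.
rewrite IH //; last by move=> a b Ha Hb; apply: Hdis; rewrite inE ?Ha ?Hb orbT.
rewrite /fillpi; split.
  case=> [[[[He Hne]|[U Hin]] Hnin]|[U [c' Hc' Hin]]].
  - left; split=> //; rewrite inE negb_or Hnin andbT; apply/eqP => E; exact: Hne.
  - by right; split=> //; exists c; rewrite ?inE ?eqxx.
  - by right; split=> //; exists c'; rewrite // inE Hc' orbT.
case=> [[He]|[U [c' Hc' Hin]]].
  rewrite inE negb_or => /andP [Hne Hnin]; left; split=> //; left; split=> //.
  by move=> E; move: Hne; rewrite E eqxx.
move: Hc'; rewrite inE => /orP [/eqP Ec|Hc'].
  subst c'; left; split; first by right.
  apply/negP => He.
  have Hec : e <> c by move=> E; rewrite -E He in Hn.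
  have He' : e \in c :: cs by rewrite inE He orbT.
  have Hc0 : c \in c :: cs by rewrite inE eqxx.
  exact: (Hdis e c He' Hc0 Hec _ _ (ucell_in U) Hin).
by right; split=> //; exists c'.
Qed.

Lemma compL cs (lab : rect -> NT) :
  (forall c, c \in cs -> forall p pi, pi c -> Inv pi -> homog p c (inr (lab c)) ->
     star (tg_step G) (p, pi) (fillp p c (Y c), fillpi pi c)) ->
  uniq cs ->
  forall p pi, Inv pi -> (forall c, c \in cs -> pi c /\ homog p c (inr (lab c))) ->
  star (tg_step G) (p, pi) (foldp p cs, foldpi pi cs).
Proof.
elim: cs => [|c cs IH] Hc Hu p pi Hinv Hcs /=; first exact: star_refl.
move: Hu => /andP [Hn Hu].
have Hc0 : c \in c :: cs by rewrite inE eqxx.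
have [Hpc Hhc] := Hcs c Hc0.
apply: star_trans (Hc c Hc0 p pi Hpc Hinv Hhc) _.
apply: IH => //.
- by move=> c' Hc'; apply: Hc; rewrite inE Hc' orbT.
- exact: Inv_fill.
move=> c' Hc'; have Hc1 : c' \in c :: cs by rewrite inE Hc' orbT.
have [Hp' Hh'] := Hcs c' Hc1.
have Hne : c' <> c by move=> E; rewrite -E Hc' in Hn.
split; first by left.
move=> i j Hij; rewrite /fillp; case: ifP => [Hij'|_]; last exact: Hh'.
by exfalso; apply: (Hinv.2 _ _ Hp' Hpc Hne i j Hij Hij').
Qed.
End Fold.
End CompSec.

Section CompSec2.
Variables (Sigma NT : finType) (G : tile_grammar Sigma NT).

Lemma comp X h w f : Gen G X h w f -> forall p pi d, pi d -> Inv pi -> hsz d = h -> wsz d = w ->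
  homog p d (inr X) -> star (tg_step G) (p, pi) (fillp p d f, fillpi pi d).
Proof.
elim=> {X h w f}.
  move=> X t f Ht Hf p pi d Hd Hinv Hh Hw Hhom.
  have [Hw1 Hw2] := Hinv.1 _ Hd.
  have Er : r2 d = r1 d by move: Hh; rewrite /hsz => Hh; mylia.
  have Ec : c2 d = c1 d by move: Hw; rewrite /wsz => Hw; mylia.
  apply: star1; apply: (@step_pack _ _ G _ _ _ _ d X f (unit_partition 1 1) Hd Hhom).
  - by left; exists t.
  - by rewrite Hh Hw; exact: strong_unit11.
  - by [].
  move=> e; rewrite /fillpi; split.
    case=> [H|[[E1 E2] Hin]]; first by left.
    right; exists (Rect 0 0 0 0); split; first by [].
    move: Hin => /in_rectP [a b c z].
    rewrite (rect_eta e) /shift_rect /= !add0n -E1 -E2; congr Rect; mylia.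
  case=> [H|[e0 [/unit11 -> ->]]]; first by left.
  right; rewrite /shift_rect /= !add0n; split; first by [].
  by rewrite /in_rect /= !leqnn Er Ec !leqnn.
move=> X om g sg h w f Hom HL Hs Hch IH p pi d Hd Hinv Hh Hw Hhom.
have [Hwd1 Hwd2] := Hinv.1 _ Hd.
set p1 := fillp p d (fun i j => inr (g i j)).
set pi1 : partition_set := fun e => (pi e /\ e <> d) \/
   exists e0, sg e0 /\ e = shift_rect (r1 d) (c1 d) e0.
have Hstep : tg_step G (p, pi) (p1, pi1).
  apply: (@step_pack _ _ G _ _ _ _ d X (fun i j => inr (g i j)) sg Hd Hhom) => //.
  - by right; exists om, g; split=> //; rewrite Hh Hw.
  - by rewrite Hh Hw.
have Hinv1 : Inv pi1 := Inv_step Hinv Hstep.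
set N := (r2 d + c2 d).+1.
set cs := undup [seq c <- allR N | pb (exists e0, sg e0 /\ c = shift_rect (r1 d) (c1 d) e0)].
have sgb e0 : sg e0 -> [/\ r1 e0 <= r2 e0, c1 e0 <= c2 e0, r2 e0 < h, c2 e0 < w &
   exists C, homog (fun i j => inr (g i j) : Sigma + NT) e0 C] by move/Hs.1.1.
have memcs c : c \in cs <-> exists e0, sg e0 /\ c = shift_rect (r1 d) (c1 d) e0.
  rewrite mem_undup mem_filter; split; first by case/andP => /pbP.
  move=> H; rewrite (introT (pbP _) H) /=.
  case: H => e0 [He0 ->]; have [a b c0 z _] := sgb _ He0.
  move: Hh Hw; rewrite /hsz /wsz => Hh Hw.
  apply: allRP; rewrite /shift_rect /= /N; mylia.
have shsg e0 i j : sg e0 -> in_rect (shift_rect (r1 d) (c1 d) e0) i j ->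
    in_rect d i j /\ in_rect e0 (i - r1 d) (j - c1 d).
  move=> He0 Hin; have [_ _ Hr Hc _] := sgb _ He0.
  apply: shift_in => //; by rewrite ?Hh ?Hw.
have subd c i j : c \in cs -> in_rect c i j -> in_rect d i j.
  by move=> /(memcs _) [e0 [He0 ->]] Hin; have [] := shsg _ _ _ He0 Hin.
set lab := fun c => g (r1 c - r1 d) (c1 c - c1 d).
set Y := fun c => fun i j => f (r1 c - r1 d + i) (c1 c - c1 d + j).
have Hcs : star (tg_step G) (p1, pi1) (foldp Y p1 cs, foldpi pi1 cs).
  apply: (@compL _ _ G Y cs lab); last first.
  - move=> c Hc; split; first by rewrite /pi1; right; apply/(memcs _).
    move: Hc => /(memcs _) [e0 [He0 ->]] i j Hin.
    have [Hr1 Hc1 Hr Hc [C HC]] := sgb _ He0.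
    have [Id Ie] := shsg _ _ _ He0 Hin.
    rewrite /p1 /fillp Id /lab /shift_rect /= !addnK.
    have := homog_val HC (conj Hr1 Hc1) Ie; case=> ->; by [].
  - exact: Hinv1.
  - exact: undup_uniq.
  move=> c /(memcs _) [e0 [He0 ->]] p' pi' Hc' Hinv' Hh'.
  have := IH e0 He0 p' pi' _ Hc' Hinv' (hsz_shift _ _ _) (wsz_shift _ _ _).
  rewrite /lab /Y /shift_rect /= !addnK in Hh' *; by apply.
apply: star_trans (star1 Hstep) _.
suff [E1 E2] : foldp Y p1 cs = fillp p d f /\ foldpi pi1 cs = fillpi pi d by rewrite -E1 -E2.
have Hdis : forall c c', c \in cs -> c' \in cs -> c <> c' -> disjoint c c'.
  move=> c c' /(memcs _) Hc /(memcs _) Hc'; apply: Hinv1.2; by rewrite /pi1; right.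
have cover i j : in_rect d i j -> exists c, [/\ c \in cs, in_rect c i j &
     forall c', c' \in cs -> in_rect c' i j -> c' = c].
  move=> /in_rectP [a b c0 z].
  have Hi : i - r1 d < h by rewrite -Hh /hsz; mylia.
  have Hj : j - c1 d < w by rewrite -Hw /wsz; mylia.
  have [e0 [[He0 Ie0] Hu]] := Hs.1.2 _ _ Hi Hj.
  have Hc : shift_rect (r1 d) (c1 d) e0 \in cs by apply/(memcs _); exists e0.
  exists (shift_rect (r1 d) (c1 d) e0); split=> //.
    have := shift_in2 d Ie0; rewrite !subnKC //.
  move=> c' /(memcs _) [e1 [He1 ->]] Hin.
  have [_ _ Hr Hc1 _] := sgb _ He1.
  have [_ Ie1] := shsg _ _ _ He1 Hin.
  by rewrite (Hu e1 (conj He1 Ie1)).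
split.
  apply: functional_extensionality => i; apply: functional_extensionality => j.
  case Hin: (in_rect d i j).
    have [c [Hc Hic Hu]] := cover _ _ Hin.
    rewrite (foldp_in _ _ (undup_uniq _) Hc Hic Hu) /Y /fillp Hin.
    move: Hc => /(memcs _) [e0 [He0 Ec]]; rewrite Ec /shift_rect /= !addnK.
    move: Hic; rewrite Ec => /in_rectP [/= a b c0 z].
    congr f; mylia.
  rewrite foldp_out; first by rewrite /p1 /fillp Hin.
  move=> c Hc; apply/negP => Hic; by rewrite (subd _ _ _ Hc Hic) in Hin.
apply: functional_extensionality => e; apply: propositional_extensionality.
rewrite (foldpi_spec pi1 e (undup_uniq _) Hdis) /fillpi /pi1; split.
  case=> [[[H|H] Hn]|[U [c Hc Hin]]].
  - by left.
  - by exfalso; move/(memcs _): H; rewrite (negbTE Hn).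
  - by right; split=> //; exact: (subd _ _ _ Hc Hin).
case=> [[He Hne]|[U Hin]].
  left; split; first by left.
  apply/negP => /(memcs _) [e0 [He0 Ee]].
  have Hc : e \in cs by apply/(memcs _); exists e0.
  have Hwe := Hinv.1 _ He.
  have Ie := subd _ _ _ Hc (wf_cell Hwe).
  exact: (Hinv.2 _ _ He Hd Hne _ _ (wf_cell Hwe) Ie).
have [c [Hc Hic _]] := cover _ _ Hin.
by right; split=> //; exists c.
Qed.

End CompSec2.


Section EqSec.
Variables (Sigma NT : finType) (G : tile_grammar Sigma NT).

Lemma Inv_whole h w : Inv (whole_partition h w).
Proof.
split; first by move=> e ->; split.
by move=> e1 e2 -> -> [].
Qed.

Lemma gen_to_Gen (p : picture Sigma) : generates G p ->
  Gen G (tg_start G) (nrows p) (ncols p) (fun i j => inl (pix p i j)).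
Proof.
case=> q [pi [Hst [Hq Hpi]]].
set d := Rect 0 0 (nrows p).-1 (ncols p).-1.
have := sound Hst erefl erefl (Inv_whole _ _) _ (erefl d) (fun i j _ => erefl).
have Eh : hsz d = nrows p by rewrite /hsz /d /= subn0.
have Ew : wsz d = ncols p by rewrite /wsz /d /= subn0.
rewrite Eh Ew => H.
apply: Gen_ext.
  apply: H => e /Hpi [E1 E2 Hr Hc] X.
  by rewrite Hq.
by move=> i j Hi Hj; rewrite /d /= !add0n Hq.
Qed.

Lemma Gen_to_gen (p : picture Sigma) :
  Gen G (tg_start G) (nrows p) (ncols p) (fun i j => inl (pix p i j)) -> generates G p.
Proof.
move=> HG.
set d := Rect 0 0 (nrows p).-1 (ncols p).-1.
have Eh : hsz d = nrows p by rewrite /hsz /d /= subn0.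
have Ew : wsz d = ncols p by rewrite /wsz /d /= subn0.
have := comp HG (erefl d) (Inv_whole _ _) Eh Ew (fun i j _ => erefl).
move=> Hst; exists (fillp (fun _ _ => inr (tg_start G)) d (fun i j => inl (pix p i j))).
exists (fillpi (whole_partition (nrows p) (ncols p)) d); split; first exact: Hst.
split.
  move=> i j Hi Hj; rewrite /fillp.
  have -> : in_rect d i j.
    by apply/in_rectP; rewrite /d /=; move: Hi Hj; rewrite /nrows /ncols => Hi Hj; split; mylia.
  by rewrite /d /= !subn0.
move=> e; rewrite /fillpi /whole_partition; split.
  case=> [[-> []]|[[E1 E2] Hin]] //.
  move/in_rectP: Hin => /= [a b c z].
  rewrite /unit_partition; move: b z; rewrite /nrows /ncols /= => b z; split=> //; mylia.
case=> E1 E2 Hr Hc; right; split=> //.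
apply/in_rectP => /=; move: Hr Hc; rewrite /nrows /ncols => Hr Hc; split=> //; mylia.
Qed.
End EqSec.


Section Geo.
Variables (T : Type) (h w : nat) (f : nat -> nat -> T) (sg : partition_set).
Hypothesis Hs : hom_partition h w f sg.

Lemma hp_block e : sg e -> [/\ r1 e <= r2 e, c1 e <= c2 e, r2 e < h & c2 e < w].
Proof. by move=> He; have [? ? ? ? _] := Hs.1 e He. Qed.

Lemma hp_val e i j : sg e -> in_rect e i j -> f i j = f (r1 e) (c1 e).
Proof.
move=> He Hin; have [a b _ _ [C HC]] := Hs.1 e He.
exact: (homog_val HC (conj a b) Hin).
Qed.

Lemma hp_uniq e1 e2 i j : sg e1 -> sg e2 -> in_rect e1 i j -> in_rect e2 i j -> e1 = e2.
Proof.
move=> H1 H2 I1 I2; have [_ _ Hr Hc] := hp_block H1.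
move/in_rectP: (I1) => [a b c z].
have Hi : i < h by mylia.
have Hj : j < w by mylia.
have [x [_ Ux]] := Hs.2 _ _ Hi Hj.
by rewrite -(Ux e1 (conj H1 I1)) -(Ux e2 (conj H2 I2)).
Qed.

Lemma hp_ex i j : i < h -> j < w -> exists e, sg e /\ in_rect e i j.
Proof. by move=> Hi Hj; have [x [Hx _]] := Hs.2 _ _ Hi Hj; exists x. Qed.

Lemma hp_disj e1 e2 : sg e1 -> sg e2 -> e1 <> e2 -> disjoint e1 e2.
Proof. by move=> H1 H2 Hne i j I1 I2; apply: Hne; apply: hp_uniq I1 I2. Qed.

Lemma hp_chain (ci cj : nat -> nat) T0 :
  (forall t, t <= T0 -> ci t < h /\ cj t < w) ->
  (forall t, t < T0 -> exists e, [/\ sg e, in_rect e (ci t) (cj t) & in_rect e (ci t.+1) (cj t.+1)]) ->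
  exists e, sg e /\ forall t, t <= T0 -> in_rect e (ci t) (cj t).
Proof.
move=> Hr Hc.
have [e [He Ie]] : exists e, sg e /\ in_rect e (ci 0) (cj 0).
  by have [a b] := Hr 0 isT; apply: hp_ex.
exists e; split=> // t; elim: t => // t IH Ht.
have [e' [He' I1 I2]] := Hc t Ht.
by rewrite (hp_uniq He (He' : sg e') (IH (ltnW Ht)) I1).
Qed.
End Geo.

Section Reg.
Variables (NT : Type) (h w : nat) (g : nat -> nat -> NT) (sg rho : partition_set).
Variable Sigma : Type.
Hypothesis Hs : strong_hom_partition h w (fun i j => inr (g i j) : Sigma + NT) sg.
Hypothesis Hr : regional_hom_partition h w g rho.

Let Hh := Hs.1.

Lemma sg_g e i j : sg e -> in_rect e i j -> g i j = g (r1 e) (c1 e).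
Proof. by move=> He Hin; have := hp_val Hh He Hin; case. Qed.

Lemma nbr e i j : sg e -> i < h -> j < w -> g i j = g (r1 e) (c1 e) -> ~~ in_rect e i j ->
  [\/ j = (c2 e).+1 /\ r1 e <= i <= r2 e,
      j.+1 = c1 e /\ r1 e <= i <= r2 e,
      i = (r2 e).+1 /\ c1 e <= j <= c2 e |
      i.+1 = r1 e /\ c1 e <= j <= c2 e] -> False.
Proof.
move=> He Hi Hj Hg Hn Hcase.
have [e' [He' Ie']] := hp_ex Hh Hi Hj.
have Hne : e <> e' by move=> E; rewrite E Ie' in Hn.
have Hlab : g (r1 e') (c1 e') = g (r1 e) (c1 e) by rewrite -(sg_g He' Ie').
have [a1 b1 _ _] := hp_block Hh He; have [a2 b2 _ _] := hp_block Hh He'.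
have Hdis := hp_disj Hh He He' Hne.
move/in_rectP: Ie' => [x1 x2 x3 x4].
suff Hadj : adjacent e e' by apply: (Hs.2 e e' He He' Hadj); rewrite /label Hlab.
case: Hcase => [[Ej Hr']|[Ej Hr']|[Ei Hc']|[Ei Hc']]; natify.
- right; right; left.
  have : c1 e' = (c2 e).+1.
    case: (leqP (c1 e') (c2 e)) => Hl; last by mylia.
    exfalso; apply: (Hdis i (c2 e)); apply/in_rectP; split; natify; mylia.
  move=> ->; split=> //; mylia.
- right; right; right.
  have : c2 e' = (c1 e).-1.
    case: (leqP (c1 e) (c2 e')) => Hl; last by mylia.
    exfalso; apply: (Hdis i (c1 e)); apply/in_rectP; split; natify; mylia.
  move=> E; split; mylia.
- left.
  have : r1 e' = (r2 e).+1.
    case: (leqP (r1 e') (r2 e)) => Hl; last by mylia.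
    exfalso; apply: (Hdis (r2 e) j); apply/in_rectP; split; natify; mylia.
  move=> ->; split=> //; mylia.
- right; left.
  have : r2 e' = (r1 e).-1.
    case: (leqP (r1 e) (r2 e')) => Hl; last by mylia.
    exfalso; apply: (Hdis (r1 e) j); apply/in_rectP; split; natify; mylia.
  move=> E; split; mylia.
Qed.

Lemma sg_is_rho e R : sg e -> rho R -> in_rect R (r1 e) (c1 e) -> e = R.
Proof.
move=> He HR HRin.
have [a1 b1 Hr1 Hc1] := hp_block Hh He.
have [a2 b2 Hr2 Hc2 [C HC]] := Hr.1.1 R HR.
have HRval i j : in_rect R i j -> g i j = g (r1 e) (c1 e).
  by move=> Hin; rewrite (HC _ _ Hin) (HC _ _ HRin).
have sub i j : in_rect e i j -> in_rect R i j.
  move=> Hin; move/in_rectP: (Hin) => [x1 x2 x3 x4].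
  have Hi : i < h by mylia.
  have Hj : j < w by mylia.
  have [R' [HR' IR']] := hp_ex Hr.1 Hi Hj.
  suff -> : R = R' by [].
  apply: NNPP => Hne; apply: (Hr.2 R R' HR HR' Hne).
  rewrite /label.
  have [a3 b3 _ _ [C' HC']] := Hr.1.1 R' HR'.
  rewrite (HC' _ _ (wf_cell (conj a3 b3))) -(HC' _ _ IR').
  by rewrite (HC _ _ (wf_cell (conj a2 b2))) -(HC _ _ HRin) (sg_g He Hin).
have Hc0 := sub _ _ (wf_cell (conj a1 b1)).
have Hc3 : in_rect R (r2 e) (c2 e) by apply: sub; apply/in_rectP; split.
move/in_rectP: Hc0 => [y1 y2 y3 y4]; move/in_rectP: Hc3 => [z1 z2 z3 z4].
have E1 : r1 e = r1 R.
  apply: NNPP => Hne.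
  apply: (nbr He (i := (r1 e).-1) (j := c1 e)); try mylia.
    by rewrite HRval //; apply/in_rectP; split; mylia.
    by apply/negP => /in_rectP [? ? ? ?]; mylia.
  apply: Or44; split; mylia.
have E2 : c1 e = c1 R.
  apply: NNPP => Hne.
  apply: (nbr He (i := r1 e) (j := (c1 e).-1)); try mylia.
    by rewrite HRval //; apply/in_rectP; split; mylia.
    by apply/negP => /in_rectP [? ? ? ?]; mylia.
  apply: Or42; split; mylia.
have E3 : r2 e = r2 R.
  apply: NNPP => Hne.
  apply: (nbr He (i := (r2 e).+1) (j := c1 e)); try mylia.
    by rewrite HRval //; apply/in_rectP; split; mylia.
    by apply/negP => /in_rectP [? ? ? ?]; mylia.
  apply: Or43; split; mylia.
have E4 : c2 e = c2 R.
  apply: NNPP => Hne.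
  apply: (nbr He (i := r1 e) (j := (c2 e).+1)); try mylia.
    by rewrite HRval //; apply/in_rectP; split; mylia.
    by apply/negP => /in_rectP [? ? ? ?]; mylia.
  apply: Or41; split; mylia.
by rewrite (rect_eta e) (rect_eta R) E1 E2 E3 E4.
Qed.

Lemma sg_regional e1 e2 : sg e1 -> sg e2 -> g (r1 e1) (c1 e1) = g (r1 e2) (c1 e2) -> e1 = e2.
Proof.
move=> H1 H2 Hl.
have [a1 b1 Hr1 Hc1] := hp_block Hh H1; have [a2 b2 Hr2 Hc2] := hp_block Hh H2.
have [R1 [HR1 I1]] := hp_ex Hr.1 (leq_ltn_trans a1 Hr1) (leq_ltn_trans b1 Hc1).
have [R2 [HR2 I2]] := hp_ex Hr.1 (leq_ltn_trans a2 Hr2) (leq_ltn_trans b2 Hc2).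
rewrite (sg_is_rho H1 HR1 I1) (sg_is_rho H2 HR2 I2).
apply: NNPP => Hne; apply: (Hr.2 R1 R2 HR1 HR2 Hne); rewrite /label.
rewrite -(hp_val Hr.1 HR1 I1) -(hp_val Hr.1 HR2 I2) //.
Qed.
End Reg.


Section Desc.
Variables (Sigma NT : finType) (G : tile_grammar Sigma NT).

Definition NTS Y h w (f : nat -> nat -> Sigma + NT) :=
  exists om g sg, [/\ (Y, om) \in tg_var G, in_LOC om h w g,
    strong_hom_partition h w (fun i j => inr (g i j) : Sigma + NT) sg,
    (exists e, sg e /\ e <> Rect 0 0 h.-1 w.-1) &
    (forall e, sg e -> Gen G (g (r1 e) (c1 e)) (hsz e) (wsz e)
                         (fun i j => f (r1 e + i) (c1 e + j)))].

Lemma descend X h w f : Gen G X h w f -> ~ (h = 1 /\ w = 1) ->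
  exists Y, NTS Y h w f /\ forall f', NTS Y h w f' -> Gen G X h w f'.
Proof.
elim=> {X h w f}; first by move=> X t f _ _ [].
move=> X om g sg h w f Hom HL Hs Hch IH Hn.
case: (classic (exists e, sg e /\ e <> Rect 0 0 h.-1 w.-1)) => [Hnt|Hnt].
  exists X; split; first by exists om, g, sg; split.
  by move=> f' [om' [g' [sg' [Hom' HL' Hs' _ Hch']]]]; exact: (GVar Hom' HL' Hs' Hch').
have [hp [wp _]] := HL.
set W := Rect 0 0 h.-1 w.-1.
have Hall e : sg e -> e = W by move=> He; apply: NNPP => Hne; apply: Hnt; exists e.
have HW : sg W by have [e [He Ie]] := hp_ex Hs.1 hp wp; rewrite -(Hall e He).
have EhW : hsz W = h by rewrite /hsz /W /= subn0 prednK.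
have EwW : wsz W = w by rewrite /wsz /W /= subn0 prednK.
have Ef (f0 : nat -> nat -> Sigma + NT) : (fun i j => f0 (r1 W + i) (c1 W + j)) = f0.
  by apply: functional_extensionality => i; apply: functional_extensionality => j.
have := IH W HW; rewrite EhW EwW Ef => /(_ Hn) [Y [HY Hrep]].
exists Y; split=> // f' Hf'.
apply: (GVar Hom HL Hs) => e He; rewrite (Hall e He) EhW EwW Ef.
exact: Hrep.
Qed.
End Desc.


Definition Diag (p : picture bool) : Prop :=
  forall i j, i.+1 < nrows p -> j.+1 < ncols p -> pix p i j = pix p i.+1 j.+1.

Section Count.
Variables (NT : finType) (G : tile_grammar bool NT).
Hypothesis HRTG : is_RTG G.
Hypothesis HL : forall p, Diag p <-> generates G p.
Variable k : nat.
Hypothesis Hk : 0 < k.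
Local Notation n := (k.*2.+1).

Definition val (u : {ffun 'I_n -> bool}) (i j : nat) : bool :=
  if (i <= j + k) && (j <= i + k) then u (inord (j + k - i)) else false.
Definition Pu u : picture bool := @Picture bool k.*2 k.*2 (\matrix_(i, j) val u i j).

Lemma pixPu u i j : i < n -> j < n -> pix (Pu u) i j = val u i j.
Proof. by move=> Hi Hj; rewrite /pix /Pu /= mxE !inordK. Qed.

Lemma Diag_Pu u : Diag (Pu u).
Proof.
move=> i j Hi Hj; rewrite /nrows /ncols /= in Hi Hj.
rewrite (pixPu _ (ltnW Hi) (ltnW Hj)) (pixPu _ Hi Hj).
rewrite /val !addSn !ltnS subSS //.
Qed.

Definition F u : nat -> nat -> bool + NT := fun i j => inl (pix (Pu u) i j).

Lemma GenPu u : Gen G (tg_start G) n n (F u).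
Proof. have H := gen_to_Gen ((HL (Pu u)).1 (@Diag_Pu u)); exact: H. Qed.

Definition whole := Rect 0 0 n.-1 n.-1.

Definition DataP u (Y : NT) (om : {set 'M[option NT]_2}) (g : nat -> nat -> NT) (sg : partition_set) :=
  [/\ (Y, om) \in tg_var G, in_LOC om n n g,
    strong_hom_partition n n (fun i j => inr (g i j) : bool + NT) sg,
    (exists e, sg e /\ e <> whole) &
    (forall e, sg e -> Gen G (g (r1 e) (c1 e)) (hsz e) (wsz e)
                         (fun i j => F u (r1 e + i) (c1 e + j)))] /\
  forall f', NTS G Y n n f' -> Gen G (tg_start G) n n f'.

Lemma ex_data u : exists x : NT * ({set 'M[option NT]_2} * ((nat -> nat -> NT) * partition_set)),
  DataP u x.1 x.2.1 x.2.2.1 x.2.2.2.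
Proof.
have [|Y [[om [g [sg [H1 H2 H3 H4 H5]]]] Hrep]] := descend (@GenPu u).
  case=> E _; have : k.*2 == 0 by case: E => ->.
  by rewrite double_eq0 => /eqP Hk0; move: Hk; rewrite Hk0.
by exists (Y, (om, (g, sg))).
Qed.

Definition dat u := proj1_sig (constructive_indefinite_description _ (ex_data u)).
Lemma datP u : DataP u (dat u).1 (dat u).2.1 (dat u).2.2.1 (dat u).2.2.2.
Proof. exact: (proj2_sig (constructive_indefinite_description _ (ex_data u))). Qed.

Definition gu u := (dat u).2.2.1.
Definition sgu u := (dat u).2.2.2.

Lemma hom_u u : hom_partition n n (fun i j => inr (gu u i j) : bool + NT) (sgu u).
Proof. by have [[_ _ [H _] _ _] _] := datP u. Qed.

Lemma strong_u u : strong_hom_partition n n (fun i j => inr (gu u i j) : bool + NT) (sgu u).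
Proof. by have [[_ _ H _ _] _] := datP u. Qed.

Lemma reg_u u : exists rho, regional_hom_partition n n (gu u) rho.
Proof.
have [[Hom HLoc _ _ _] _] := datP u.
exact: (HRTG.2 _ _ Hom _ _ _ HLoc).
Qed.

Lemma regional_u u e1 e2 : sgu u e1 -> sgu u e2 -> gu u (r1 e1) (c1 e1) = gu u (r1 e2) (c1 e2) -> e1 = e2.
Proof.
have [rho Hr] := reg_u u.
exact: (sg_regional (strong_u u) Hr).
Qed.

Definition code (e : rect) : 'I_n * 'I_n * 'I_n * 'I_n :=
  (inord (r1 e), inord (c1 e), inord (r2 e), inord (c2 e)).

Lemma code_inj e e' : r1 e < n -> c1 e < n -> r2 e < n -> c2 e < n ->
  r1 e' < n -> c1 e' < n -> r2 e' < n -> c2 e' < n -> code e = code e' -> e = e'.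
Proof.
move=> ? ? ? ? ? ? ? ? E.
have := congr1 (fun x => nat_of_ord x.1.1.1) E; have := congr1 (fun x => nat_of_ord x.1.1.2) E.
have := congr1 (fun x => nat_of_ord x.1.2) E; have := congr1 (fun x => nat_of_ord x.2) E.
rewrite /= !inordK // => E4 E3 E2 E1.
by rewrite (rect_eta e) (rect_eta e') E1 E2 E3 E4.
Qed.

Lemma sg_range u e : sgu u e -> [/\ r1 e < n, c1 e < n, r2 e < n & c2 e < n].
Proof.
move=> He; have [a b c z] := hp_block (hom_u u) He.
split=> //; [exact: leq_ltn_trans a c | exact: leq_ltn_trans b z].
Qed.

Definition blk u X := epsilon (inhabits (Rect 0 0 0 0)) (fun e => sgu u e /\ gu u (r1 e) (c1 e) = X).

Definition kappa u : {ffun NT -> option ('I_n * 'I_n * 'I_n * 'I_n)} :=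
  [ffun X => if pb (exists e, sgu u e /\ gu u (r1 e) (c1 e) = X) then Some (code (blk u X)) else None].

Lemma blkP u X : (exists e, sgu u e /\ gu u (r1 e) (c1 e) = X) ->
  sgu u (blk u X) /\ gu u (r1 (blk u X)) (c1 (blk u X)) = X.
Proof. by move=> H; exact: (epsilon_spec _ _ H). Qed.

Lemma kappa_sg u e : sgu u e -> kappa u (gu u (r1 e) (c1 e)) = Some (code e).
Proof.
move=> He; rewrite ffunE.
have Hex : exists e', sgu u e' /\ gu u (r1 e') (c1 e') = gu u (r1 e) (c1 e) by exists e.
rewrite (introT (pbP _) Hex); have [Hb Hl] := blkP Hex.
by rewrite (regional_u Hb He Hl).
Qed.

Lemma kappa_inv u v e : kappa u = kappa v -> sgu u e ->
  sgu v e /\ gu v (r1 e) (c1 e) = gu u (r1 e) (c1 e).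
Proof.
move=> Hk' He; have := kappa_sg He; rewrite Hk' ffunE.
case: pbP => // Hex E; have Ec := Some_inj E.
have [Hb Hl] := blkP Hex.
have [a1 b1 c1' d1] := sg_range He; have [a2 b2 c2' d2] := sg_range Hb.
by move: Hb Hl; rewrite (code_inj a2 b2 c2' d2 a1 b1 c1' d1 Ec).
Qed.

Lemma kappa_iff u v e : kappa u = kappa v -> (sgu u e <-> sgu v e).
Proof.
move=> Hk'; split; first by move/(kappa_inv Hk') => [].
by move/(kappa_inv (esym Hk')) => [].
Qed.

Lemma mix u v i j : kappa u = kappa v -> i.+1 < n -> j.+1 < n ->
  ~ (exists e, [/\ sgu u e, in_rect e i j & in_rect e i.+1 j.+1]) ->
  pix (Pu u) i j = pix (Pu v) i.+1 j.+1.
Proof.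
move=> Hk' Hi Hj Hno.
have [B [HB IB]] := hp_ex (hom_u v) Hi Hj.
have [HBu HBl] := kappa_inv (esym Hk') HB.
have NB : ~~ in_rect B i j by apply/negP => IB'; apply: Hno; exists B.
set Fm := fun a b => if in_rect B a b then F v a b else F u a b.
have [[Hom HLoc Hs Hnt Hch] Hrep] := datP u.
have [[_ _ _ _ Hchv] _] := datP v.
have HN : NTS G (dat u).1 n n Fm.
  exists (dat u).2.1, (gu u), (sgu u); split=> //.
  move=> e He.
  have [a1 b1 _ _] := hp_block (hom_u u) He.
  case: (eqVneq e B) => [Ee|Hne].
    subst e; rewrite HBl; apply: Gen_ext (Hchv _ HB) _ => a b Ha Hb.
    rewrite /Fm; case: ifP => // /negP []; apply/in_rectP; move: Ha Hb; rewrite /hsz /wsz => Ha Hb.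
    split; mylia.
  apply: Gen_ext (Hch _ He) _ => a b Ha Hb.
  rewrite /Fm; case: ifP => // Hin.
  have Hne' : e <> B by move=> E; rewrite E eqxx in Hne.
  have Hie : in_rect e (r1 e + a) (c1 e + b).
    apply/in_rectP; move: Ha Hb; rewrite /hsz /wsz => Ha Hb; split; mylia.
  by exfalso; apply: (hp_disj (hom_u u) He HBu Hne' Hie Hin).
have HG := Hrep Fm HN.
set Pm := @Picture bool k.*2 k.*2 (\matrix_(a, b) if in_rect B a b then pix (Pu v) a b else pix (Pu u) a b).
have HPm : generates G Pm.
  apply: Gen_to_gen; apply: Gen_ext HG _ => a b Ha Hb.
  by rewrite /Fm /F /Pm /pix /= !mxE !inordK //; case: ifP.
have := (HL Pm).2 HPm i j Hi Hj.
by rewrite /Pm /pix /= !mxE !inordK ?(negbTE NB) ?IB //; apply: ltnW.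
Qed.

Lemma valP u t d : d <= k -> t + d < n -> pix (Pu u) t (t + d) = u (inord (k + d)).
Proof.
move=> Hd Ht; rewrite pixPu; try mylia.
rewrite /val; have -> : (t <= t + d + k) && (t + d <= t + k) by apply/andP; split; mylia.
by congr (u (inord _)); mylia.
Qed.

Lemma valM u t d : d <= k -> t + d < n -> pix (Pu u) (t + d) t = u (inord (k - d)).
Proof.
move=> Hd Ht; rewrite pixPu; try mylia.
rewrite /val; have -> : (t + d <= t + k) && (t <= t + d + k) by apply/andP; split; mylia.
by congr (u (inord _)); mylia.
Qed.

Definition singleP u d := exists e, sgu u e /\ forall t, t + d < n -> in_rect e t (t + d).
Definition singleM u d := exists e, sgu u e /\ forall t, t + d < n -> in_rect e (t + d) t.

Lemma single_iff u v d : kappa u = kappa v -> (singleP u d <-> singleP v d).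
Proof.
move=> Hk'; split; case=> e [He H]; exists e; split=> //; by apply/(kappa_iff e Hk').
Qed.

Lemma not_both u d : d <= k -> singleP u d -> singleM u d -> False.
Proof.
move=> Hd [e1 [H1 I1]] [e2 [H2 I2]].
have A1 := I1 0 (ltac:(mylia)); have A2 := I1 (n.-1 - d) (ltac:(mylia)).
have B1 := I2 0 (ltac:(mylia)); have B2 := I2 (n.-1 - d) (ltac:(mylia)).
move/in_rectP: A1 => [? ? ? ?]; move/in_rectP: A2 => [? ? ? ?].
move/in_rectP: B1 => [? ? ? ?]; move/in_rectP: B2 => [? ? ? ?].
have C1 : in_rect e1 d d by apply/in_rectP; split; mylia.
have C2 : in_rect e2 d d by apply/in_rectP; split; mylia.
have E := hp_uniq (hom_u u) H1 H2 C1 C2; subst e2.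
have [a b c z] := hp_block (hom_u u) H1.
have Ew : e1 = whole by rewrite (rect_eta e1) /whole; congr Rect; mylia.
have [[_ _ _ [e [He Hne]] _] _] := datP u.
have [a' b' c' z'] := hp_block (hom_u u) He.
apply: Hne; rewrite -Ew; apply: (hp_uniq (hom_u u) He H1 (wf_cell (conj a' b'))).
by rewrite Ew; apply/in_rectP; split=> /=; mylia.
Qed.

Lemma crossP u v d : kappa u = kappa v -> d <= k -> ~ singleP u d ->
  u (inord (k + d)) = v (inord (k + d)).
Proof.
move=> Hk' Hd Hns.
have : ~ forall t, t < n.-1 - d -> exists e, [/\ sgu u e, in_rect e t (t + d) & in_rect e t.+1 (t.+1 + d)].
  move=> Hall; apply: Hns.
  have Hr : forall t, t <= n.-1 - d -> (fun t => t) t < n /\ (fun t => t + d) t < n by move=> t Ht /=; split; mylia.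
  have [e [He Ie]] := @hp_chain _ _ _ _ _ (hom_u u) (fun t => t) (fun t => t + d) (n.-1 - d) Hr Hall.
  by exists e; split=> // t Ht; apply: Ie; mylia.
move=> Hnall; have [t Ht0] := not_all_ex_not _ _ Hnall; have [Ht Hno] := imply_to_and _ _ Ht0.
have := mix Hk' (_ : t.+1 < n) (_ : (t + d).+1 < n) _.
rewrite -addSn (valP u Hd) ?(valP v Hd); try mylia.
apply; try mylia.
by case=> e [He I1 I2]; apply: Hno; exists e; split=> //; rewrite addSn.
Qed.

Lemma crossM u v d : kappa u = kappa v -> d <= k -> ~ singleM u d ->
  u (inord (k - d)) = v (inord (k - d)).
Proof.
move=> Hk' Hd Hns.
have : ~ forall t, t < n.-1 - d -> exists e, [/\ sgu u e, in_rect e (t + d) t & in_rect e (t.+1 + d) t.+1].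
  move=> Hall; apply: Hns.
  have Hr : forall t, t <= n.-1 - d -> (fun t => t + d) t < n /\ (fun t => t) t < n by move=> t Ht /=; split; mylia.
  have [e [He Ie]] := @hp_chain _ _ _ _ _ (hom_u u) (fun t => t + d) (fun t => t) (n.-1 - d) Hr Hall.
  by exists e; split=> // t Ht; apply: Ie; mylia.
move=> Hnall; have [t Ht0] := not_all_ex_not _ _ Hnall; have [Ht Hno] := imply_to_and _ _ Ht0.
have := mix Hk' (_ : (t + d).+1 < n) (_ : t.+1 < n) _.
rewrite -addSn (valM u Hd) ?(valM v Hd); try mylia.
apply; try mylia.
by case=> e [He I1 I2]; apply: Hno; exists e; split=> //; rewrite addSn.
Qed.

Definition bits u : {ffun 'I_k -> bool} :=
  [ffun j : 'I_k => if pb (singleP u j.+1) then u (inord (k + j.+1)) else u (inord (k - j.+1))].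

Definition Enc u := (kappa u, bits u).

Lemma Enc_inj : injective Enc.
Proof.
move=> u v [Hk' Hb]; apply/ffunP => x.
have Hx : nat_of_ord x <= k + k by have := ltn_ord x; move: (nat_of_ord x) => m; rewrite ltnS -addnn.
case: (ltngtP x k) => Hxk.
- (* below the main diagonal *)
  have [d Ed] : exists d, d = k - x by exists (k - x).
  have Hd : d <= k by mylia.
  have Ex : x = inord (k - d) :> 'I_n by apply: val_inj; rewrite /= inordK; mylia.
  rewrite Ex.
  case: (classic (singleP u d)) => Hs.
    apply: crossM => // Hm; exact: (not_both Hd Hs Hm).
  have Hj : d.-1 < k by mylia.
  have := congr1 (fun f : {ffun 'I_k -> bool} => f (Ordinal Hj)) Hb; rewrite !ffunE /=.
  have Ed' : d.-1.+1 = d by mylia.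
  rewrite Ed'; case: pbP => // _; case: pbP => // Hv.
  by exfalso; apply: Hs; apply/(single_iff d Hk').
- have [d Ed] : exists d, d = x - k by exists (x - k).
  have Hd : d <= k by mylia.
  have Ex : x = inord (k + d) :> 'I_n by apply: val_inj; rewrite /= inordK; mylia.
  rewrite Ex.
  case: (classic (singleP u d)) => Hs; last exact: crossP.
  have Hj : d.-1 < k by mylia.
  have := congr1 (fun f : {ffun 'I_k -> bool} => f (Ordinal Hj)) Hb; rewrite !ffunE /=.
  have Ed' : d.-1.+1 = d by mylia.
  rewrite Ed'; case: pbP => // _; case: pbP => // Hv.
  by exfalso; apply: Hv; apply/(single_iff d Hk').
- have Ex : x = inord (k + 0) :> 'I_n by apply: val_inj; rewrite /= inordK; mylia.
  rewrite Ex; apply: crossP => // Hs; apply: (not_both (leq0n k) Hs).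
  by case: Hs => e [He Ie]; exists e; split=> // t Ht; rewrite addn0; have := Ie t Ht; rewrite addn0.
Qed.

Lemma count_bound : 2 ^ n <= (n * n * n * n).+1 ^ #|NT| * 2 ^ k.
Proof.
have := @leq_card _ _ Enc Enc_inj.
by rewrite card_prod !card_ffun !card_option !card_prod !card_ord card_bool.
Qed.
End Count.


Definition okD (a b : option bool) : bool :=
  if a is Some x then (if b is Some y then x == y else true) else true.

Definition thetaD : {set 'M[option bool]_2} := [set t : 'M[option bool]_2 | okD (t i0 i0) (t i1 i1)].

Lemma Diag_LT : locally_testable Diag.
Proof.
exists 2; split=> //; exists thetaD => p; split.
  move=> Hd i j Hi Hj; rewrite inE /ktile_at !mxE /= !addn0 !addn1 /framed.
  case: ifP => // /andP [/andP [a b] /andP [c z]].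
  case: ifP => // /andP [/andP [a' b'] /andP [c' z']] /=.
  apply/eqP; have := Hd i.-1 j.-1; rewrite !prednK //; apply; mylia.
move=> H i j Hi Hj.
have Hb1 : i.+1 + 2 <= (nrows p).+2 by rewrite addn2 !ltnS ltnW.
have Hb2 : j.+1 + 2 <= (ncols p).+2 by rewrite addn2 !ltnS ltnW.
have := H i.+1 j.+1 Hb1 Hb2.
rewrite inE /ktile_at !mxE /= !addn0 !addn1 /framed /=.
rewrite Hi Hj (ltnW Hi) (ltnW Hj) /=.
by move/eqP.
Qed.

Lemma leq_expn2 x y e : x <= y -> x ^ e <= y ^ e.
Proof. by move=> H; elim: e => // e IH; rewrite !expnS leq_mul. Qed.

Lemma arith N : exists k, 0 < k /\
  (k.*2.+1 * k.*2.+1 * k.*2.+1 * k.*2.+1).+1 ^ N * 2 ^ k < 2 ^ k.*2.+1.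
Proof.
have [b Eb] : exists b, b = 8 * N + 8 by exists (8 * N + 8).
have [a Ea] : exists a, a = b + b by exists (b + b).
have Ha : 0 < 2 ^ a by rewrite expn_gt0.
exists (2 ^ a).-1.
have [k Ek] : exists k, k = (2 ^ a).-1 by exists (2 ^ a).-1.
rewrite -Ek.
have Hk1 : k.+1 = 2 ^ a by rewrite Ek prednK.
have Hk : 0 < k.
  have : 2 ^ 1 < 2 ^ a by rewrite ltn_exp2l //; mylia.
  by rewrite expn1 -Hk1 ltnS => H; exact: ltnW.
split=> //.
have [n En] : exists n, n = k.*2.+1 by exists k.*2.+1.
rewrite -En.
have [M EM] : exists M, M = 2 ^ a.+1 by exists (2 ^ a.+1).
have HnM : n < M by rewrite EM expnS -Hk1 En; mylia.
have H4 : (n * n * n * n).+1 <= 2 ^ (a.+1 * 4).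
  rewrite expnM -EM (_ : M ^ 4 = M * M * M * M); last by rewrite !expnS expn0 muln1 !mulnA.
  by apply: ltn_mul; [apply: ltn_mul; [apply: ltn_mul|]|].
have H5 : (n * n * n * n).+1 ^ N <= 2 ^ (a.+1 * 4 * N).
  by rewrite [2 ^ (a.+1 * 4 * N)]expnM; apply: leq_expn2.
have H6 : a.+1 * 4 * N < 2 ^ a.
  have Hb : b < 2 ^ b by apply: ltn_expl.
  have : b.+1 * b.+1 <= 2 ^ b * 2 ^ b by apply: leq_mul.
  rewrite -expnD -Ea => H.
  apply: leq_trans H; rewrite Ea Eb.
  natify; nia.
apply: (leq_ltn_trans (leq_mul H5 (leqnn _))).
rewrite -expnD ltn_exp2l //.
rewrite En; natify; lia.
Qed.

Lemma not_RTG_Diag : ~ in_L_RTG Diag.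
Proof.
case=> NT [G [HR HL]].
have [k [Hk Hlt]] := arith #|NT|.
have := count_bound HR HL Hk.
by rewrite leqNgt Hlt.
Qed.

Theorem part2 : exists (Sigma : finType) (L : language Sigma),
      locally_testable L /\ ~ in_L_RTG L.
Proof. by exists (bool : finType), Diag; split; [exact: Diag_LT | exact: not_RTG_Diag]. Qed.


Theorem proposition5 :
  (exists (Sigma : finType) (L : language Sigma),
      in_L_RTG L /\ ~ locally_testable L) /\
  (exists (Sigma : finType) (L : language Sigma),
      locally_testable L /\ ~ in_L_RTG L).
Proof.
split; [exact: part1 | exact: part2].
Qed.
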